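(* In the upper half-space model $\mathbb{H}^3=\{x_3>0\}$ with metric $\frac{1}{x_3^2}(dx_1^2+dx_2^2+dx_3^2)$, let $\gamma:[0,\infty)\to\mathbb{H}^3$, $\gamma(s)=(\gamma_1(s),0,\gamma_2(s))$, be a regular curve parametrized by hyperbolic arc length with $\gamma_1>0$, $\gamma_2>0$, and set $x_g(\gamma([0,s]))=\frac{1}{s}\int_0^s\frac{\gamma_1(t)}{\gamma_2(t)}\,dt$. Suppose $\gamma$ has confined centroid, i.e. $\lim_{s\to\infty}x_g(\gamma([0,s]))$ exists and is finite. Then the end of revolution $f(\theta,s)=R_\theta\gamma(s)$ is parabolic.
   Context: $R_\theta$ is the rotation of angle $\theta$ about the $x_3$-axis, an isometry of $\mathbb{H}^3$. The end carries the induced metric. An end is parabolic if every bounded harmonic function on it is determined by its boundary values. *)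

(* Defs.v *)
From Stdlib Require Import Reals.
From Coquelicot Require Import Coquelicot.
Open Scope R_scope.

Definition pt3 := (R * R * R)%type.
Definition c1 (p : pt3) : R := fst (fst p).
Definition c2 (p : pt3) : R := snd (fst p).
Definition c3 (p : pt3) : R := snd p.

Definition Rot (th : R) (p : pt3) : pt3 :=
  (c1 p * cos th - c2 p * sin th, c1 p * sin th + c2 p * cos th, c3 p).

Definition end_rev (g1 g2 : R -> R) (th s : R) : pt3 := Rot th (g1 s, 0, g2 s).

Definition d_th (F : R -> R -> R) (th s : R) : R := Derive (fun t => F t s) th.
Definition d_s  (F : R -> R -> R) (th s : R) : R := Derive (fun t => F th t) s.

(* Induced metric from the hyperbolic metric (1/x3^2)(dx1^2+dx2^2+dx3^2):
   g_ij = (1/f3^2) <d_i f, d_j f>. *)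
Section Metric.
Variable f : R -> R -> pt3.
Let f1 th s := c1 (f th s).
Let f2 th s := c2 (f th s).
Let f3 th s := c3 (f th s).
Definition gTT (th s : R) : R :=
  / (f3 th s)^2 * ((d_th f1 th s)^2 + (d_th f2 th s)^2 + (d_th f3 th s)^2).
Definition gTS (th s : R) : R :=
  / (f3 th s)^2 * (d_th f1 th s * d_s f1 th s + d_th f2 th s * d_s f2 th s
                   + d_th f3 th s * d_s f3 th s).
Definition gSS (th s : R) : R :=
  / (f3 th s)^2 * ((d_s f1 th s)^2 + (d_s f2 th s)^2 + (d_s f3 th s)^2).
Definition gdet (th s : R) : R := gTT th s * gSS th s - (gTS th s)^2.
(* Laplace-Beltrami operator of the induced metric in the chart (theta, s):
   Delta u = (1/sqrt|g|) d_i (sqrt|g| g^{ij} d_j u). *)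
Definition laplace_beltrami (u : R -> R -> R) (th s : R) : R :=
  / sqrt (gdet th s) *
  ( d_th (fun a b => sqrt (gdet a b) *
            (gSS a b / gdet a b * d_th u a b - gTS a b / gdet a b * d_s u a b)) th s
  + d_s  (fun a b => sqrt (gdet a b) *
            (- gTS a b / gdet a b * d_th u a b + gTT a b / gdet a b * d_s u a b)) th s).
End Metric.

Definition uncurry2 (u : R -> R -> R) (p : R * R) : R := u (fst p) (snd p).

Definition C2_interior (u : R -> R -> R) : Prop :=
  forall th s, 0 < s ->
    ex_derive (fun t => u t s) th /\ ex_derive (fun t => u th t) s /\
    ex_derive (fun t => d_th u t s) th /\ ex_derive (fun t => d_th u th t) s /\
    ex_derive (fun t => d_s u t s) th /\ ex_derive (fun t => d_s u th t) s /\
    continuous (uncurry2 u) (th, s) /\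
    continuous (uncurry2 (d_th u)) (th, s) /\ continuous (uncurry2 (d_s u)) (th, s) /\
    continuous (uncurry2 (d_th (d_th u))) (th, s) /\
    continuous (uncurry2 (d_s (d_th u))) (th, s) /\
    continuous (uncurry2 (d_th (d_s u))) (th, s) /\
    continuous (uncurry2 (d_s (d_s u))) (th, s).

(* A bounded harmonic function on the end S^1 x [0, oo) (theta taken 2pi-periodic),
   continuous up to the boundary {s = 0}, harmonic in the interior. *)
Definition bounded_harmonic_on_end (f : R -> R -> pt3) (u : R -> R -> R) : Prop :=
  (forall th s, u (th + 2 * PI) s = u th s) /\
  (forall th s, 0 <= s ->
     filterlim (uncurry2 u) (within (fun p : R * R => 0 <= snd p) (locally (th, s)))
               (locally (u th s))) /\
  C2_interior u /\
  (forall th s, 0 < s -> laplace_beltrami f u th s = 0) /\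
  (exists M, forall th s, 0 <= s -> Rabs (u th s) <= M).

Definition parabolic_end (f : R -> R -> pt3) : Prop :=
  forall u v, bounded_harmonic_on_end f u -> bounded_harmonic_on_end f v ->
    (forall th, u th 0 = v th 0) ->
    forall th s, 0 <= s -> u th s = v th s.

Definition smooth (g : R -> R) : Prop := forall n x, ex_derive_n g n x.

Definition centroid (g1 g2 : R -> R) (s : R) : R :=
  / s * RInt (fun t => g1 t / g2 t) 0 s.

(* Main.v *)
Require Import Defs.
From Stdlib Require Import Reals Lra Classical ClassicalEpsilon List.
From Coquelicot Require Import Coquelicot.
Open Scope R_scope.

Lemma max_test (f f1 : R -> R) x D r : 0 < r ->
  (forall y, Rabs (y - x) < r -> is_derive f y (f1 y)) ->
  is_derive f1 x D ->
  (forall y, Rabs (y - x) < r -> f y <= f x) -> f1 x = 0 /\ D <= 0.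
Proof.
intros Hr Hd HD Hm.
assert (H0 : f1 x = 0).
{ assert (Hl : derivable_pt_lim f x (f1 x)).
  { apply is_derive_Reals. apply Hd. rewrite Rminus_diag, Rabs_R0; lra. }
  pose (pr := exist _ (f1 x) Hl : derivable_pt f x).
  change (derive_pt f x pr = 0).
  apply (deriv_maximum f (x - r) (x + r)); try lra.
  intros y H1 H2; apply Hm. apply Rabs_def1; lra. }
split; auto.
destruct (Rle_or_lt D 0) as [|HDp]; auto. exfalso.
apply is_derive_Reals in HD.
destruct (HD (D/2) ltac:(lra)) as [del Hdel].
assert (Hpos : forall h, 0 < h -> h < del -> h < r -> 0 < f1 (x + h)).
{ intros h h1 h2 h3. specialize (Hdel h ltac:(lra) ltac:(rewrite Rabs_pos_eq; lra)).
  rewrite H0, Rminus_0_r in Hdel. apply Rabs_def2 in Hdel.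
  destruct Hdel as [_ Hdel].
  assert (0 < f1 (x + h) / h) by lra.
  replace (f1 (x+h)) with ((f1 (x+h)/h) * h) by (field; lra).
  apply Rmult_lt_0_compat; lra. }
set (h0 := Rmin del r / 2).
assert (Hh0 : 0 < h0 /\ h0 < del /\ h0 < r).
{ unfold h0; pose proof (cond_pos del). unfold Rmin; destruct Rle_dec; lra. }
assert (Hcont : forall y, Rabs (y - x) < r -> continuity_pt f y).
{ intros y Hy. apply continuity_pt_filterlim. apply (ex_derive_continuous (V:=R_NormedModule)).
  eexists; apply Hd; auto. }
assert (HR : forall y, x <= y <= x + h0 -> Rabs (y - x) < r).
{ intros y Hy. rewrite Rabs_pos_eq; lra. }
destruct (MVT_gen f (x + h0/2) (x + h0) f1) as [c [Hc Hc2]].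
{ intros y Hy. apply Hd. rewrite Rmin_left in Hy by lra. rewrite Rmax_right in Hy by lra.
  apply HR; lra. }
{ intros y Hy. rewrite Rmin_left in Hy by lra. rewrite Rmax_right in Hy by lra.
  apply Hcont, HR; lra. }
rewrite Rmin_left in Hc by lra. rewrite Rmax_right in Hc by lra.
destruct (MVT_gen f x (x + h0/2) f1) as [c' [Hc' Hc2']].
{ intros y Hy. apply Hd. rewrite Rmin_left in Hy by lra. rewrite Rmax_right in Hy by lra.
  apply HR; lra. }
{ intros y Hy. rewrite Rmin_left in Hy by lra. rewrite Rmax_right in Hy by lra.
  apply Hcont, HR; lra. }
rewrite Rmin_left in Hc' by lra. rewrite Rmax_right in Hc' by lra.
assert (P1 : 0 < f1 c).
{ replace c with (x + (c - x)) by ring. apply Hpos; lra. }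
assert (P2 : 0 <= f1 c').
{ destruct (Req_dec c' x) as [->|Hne]. lra.
  replace c' with (x + (c' - x)) by ring. left; apply Hpos; lra. }
assert (f (x + h0) <= f x) by (apply Hm; rewrite Rabs_pos_eq; lra).
assert (0 < f1 c * (x + h0 - (x + h0/2))) by (apply Rmult_lt_0_compat; lra).
assert (0 <= f1 c' * (x + h0/2 - x)) by (apply Rmult_le_pos; lra).
lra.
Qed.

Definition inrect a b c d (x y : R) := a <= x <= b /\ c <= y <= d.

Lemma cover (F G : R -> R -> R) a b c d :
  (forall x y, inrect a b c d x y -> exists del, 0 < del /\
     forall x' y', inrect a b c d x' y' -> Rabs (x' - x) < del -> Rabs (y' - y) < del ->
       F x' y' < G x y) ->
  exists l : list (R * R), (forall t, In t l -> inrect a b c d (fst t) (snd t)) /\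
    forall x y, inrect a b c d x y -> exists t, In t l /\ F x y < G (fst t) (snd t).
Proof.
intros H.
assert (Hd : forall t : Compactness.Tn 2 R, exists del : posreal,
   inrect a b c d (fst t) (fst (snd t)) ->
   forall x' y', inrect a b c d x' y' -> Rabs (x' - fst t) < del -> Rabs (y' - fst (snd t)) < del ->
       F x' y' < G (fst t) (fst (snd t))).
{ intros t. destruct (classic (inrect a b c d (fst t) (fst (snd t)))) as [Hi|Hn].
  - destruct (H _ _ Hi) as [del [Hdel Hp]]. exists (mkposreal del Hdel). intros _; exact Hp.
  - exists (mkposreal 1 Rlt_0_1). intros Hi; tauto. }
set (delta := fun t => proj1_sig (constructive_indefinite_description _ (Hd t))).
assert (Hdelta : forall t, inrect a b c d (fst t) (fst (snd t)) ->
   forall x' y', inrect a b c d x' y' -> Rabs (x' - fst t) < delta t -> Rabs (y' - fst (snd t)) < delta t ->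
       F x' y' < G (fst t) (fst (snd t))).
{ intros t. unfold delta. destruct (constructive_indefinite_description _ (Hd t)) as [dl Hdl]. exact Hdl. }
apply NNPP; intro Hno.
apply (compactness_list 2 (a,(c,tt)) (b,(d,tt)) delta). intros [l Hl].
apply Hno. exists (map (fun t : Compactness.Tn 2 R => (fst t, fst (snd t))) (filter (fun t =>
   if Rle_dec a (fst t) then if Rle_dec (fst t) b then if Rle_dec c (fst (snd t)) then
   if Rle_dec (fst (snd t)) d then true else false else false else false else false) l)).
split.
- intros t Ht. apply in_map_iff in Ht. destruct Ht as [t' [<- Ht']].
  apply filter_In in Ht'. destruct Ht' as [_ Hb]. simpl.
  repeat destruct Rle_dec; try discriminate. split; lra.
- intros x y Hxy. destruct (Hl (x,(y,tt))) as [t [Ht [Hbt Hct]]].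
  { destruct Hxy. simpl. tauto. }
  destruct t as [t1 [t2 []]]. simpl in Hbt, Hct.
  exists (t1, t2). split.
  + apply in_map_iff. exists (t1,(t2,tt)). split; auto. apply filter_In. split; auto.
    simpl. repeat destruct Rle_dec; try lra; auto.
  + simpl. apply (Hdelta (t1,(t2,tt))); simpl; try tauto.
    unfold inrect; simpl in Hbt; lra.
Qed.

Lemma list_bound (g : R * R -> R) (l : list (R*R)) m :
  (forall t, In t l -> g t < m) -> exists m', m' < m /\ forall t, In t l -> g t <= m'.
Proof.
induction l as [|t0 l IH]; intros H.
- exists (m - 1). split. lra. intros t [].
- destruct IH as [m' [H1 H2]]. { intros t Ht; apply H; right; auto. }
  exists (Rmax m' (g t0)). split.
  + apply Rmax_lub_lt; auto. apply H; left; auto.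
  + intros t [<-|Ht]. apply Rmax_r. eapply Rle_trans. apply H2; auto. apply Rmax_l.
Qed.

Lemma list_bound2 (g : R * R -> R) (l : list (R*R)) :
  exists M, forall t, In t l -> g t <= M.
Proof.
induction l as [|t0 l [M IH]].
- exists 0. intros t [].
- exists (Rmax M (g t0)). intros t [<-|Ht]. apply Rmax_r.
  eapply Rle_trans. apply IH; auto. apply Rmax_l.
Qed.

Lemma evt2 (F : R -> R -> R) a b c d : a <= b -> c <= d ->
  (forall x y, inrect a b c d x y -> forall eps, 0 < eps -> exists del, 0 < del /\
     forall x' y', inrect a b c d x' y' -> Rabs (x' - x) < del -> Rabs (y' - y) < del ->
       F x' y' < F x y + eps) ->
  exists x0 y0, inrect a b c d x0 y0 /\ forall x y, inrect a b c d x y -> F x y <= F x0 y0.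
Proof.
intros Hab Hcd Hc.
destruct (cover F (fun x y => F x y + 1) a b c d) as [l [_ Hl]].
{ intros x y Hi. apply Hc; auto; lra. }
destruct (list_bound2 (fun t => F (fst t) (snd t) + 1) l) as [M HM].
set (E := fun r => exists x y, inrect a b c d x y /\ r = F x y).
assert (HE : bound E).
{ exists M. intros r [x [y [Hi ->]]]. destruct (Hl x y Hi) as [t [Ht Hlt]].
  specialize (HM t Ht). simpl in HM. lra. }
assert (HEn : exists r, E r).
{ exists (F a c). exists a, c. split; [split; lra|auto]. }
destruct (completeness E HE HEn) as [m [Hub Hlub]].
apply NNPP; intro Hno.
assert (Hlt : forall x y, inrect a b c d x y -> F x y < m).
{ intros x y Hi. destruct (Rle_lt_or_eq_dec (F x y) m) as [|Heq]; auto.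
  { apply Hub. exists x, y; auto. }
  exfalso. apply Hno. exists x, y. split; auto. intros x' y' Hi'.
  rewrite Heq. apply Hub. exists x', y'; auto. }
destruct (cover F (fun x y => (F x y + m)/2) a b c d) as [l2 [Hl2a Hl2]].
{ intros x y Hi. destruct (Hc x y Hi ((m - F x y)/2)) as [del [Hdel Hp]].
  { specialize (Hlt x y Hi). lra. }
  exists del; split; auto. intros x' y' Hi' H1 H2. specialize (Hp x' y' Hi' H1 H2). lra. }
destruct (list_bound (fun t => (F (fst t) (snd t) + m)/2) l2 m) as [m' [Hm' Hm2]].
{ intros t Ht. specialize (Hlt _ _ (Hl2a t Ht)). lra. }
assert (m <= m').
{ apply Hlub. intros r [x [y [Hi ->]]]. destruct (Hl2 x y Hi) as [t [Ht Hlt2]].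
  specialize (Hm2 t Ht). simpl in Hm2. lra. }
lra.
Qed.

Definition rho (g1 g2 : R -> R) s := g1 s / g2 s.

Definition good (g1 g2 : R -> R) :=
  (forall s, ex_derive g1 s) /\ (forall s, ex_derive g2 s) /\
  (forall s, 0 <= s -> 0 < g1 s /\ 0 < g2 s) /\
  (forall s, 0 <= s -> ((Derive g1 s)^2 + (Derive g2 s)^2) / (g2 s)^2 = 1).

Section M.
Context (g1 g2 : R -> R) (G : good g1 g2).

Lemma dth1 th s : d_th (fun a b => Defs.c1 (end_rev g1 g2 a b)) th s = - g1 s * sin th.
Proof. unfold d_th, end_rev, Rot, Defs.c1, Defs.c2, Defs.c3; simpl.
apply is_derive_unique. auto_derive; auto. ring. Qed.
Lemma dth2 th s : d_th (fun a b => Defs.c2 (end_rev g1 g2 a b)) th s = g1 s * cos th.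
Proof. unfold d_th, end_rev, Rot, Defs.c1, Defs.c2, Defs.c3; simpl.
apply is_derive_unique. auto_derive; auto. ring. Qed.
Lemma dth3 th s : d_th (fun a b => Defs.c3 (end_rev g1 g2 a b)) th s = 0.
Proof. unfold d_th, end_rev, Rot, Defs.c1, Defs.c2, Defs.c3; simpl.
apply is_derive_unique. auto_derive; auto. Qed.
Lemma ds1 th s : d_s (fun a b => Defs.c1 (end_rev g1 g2 a b)) th s = Derive g1 s * cos th.
Proof. destruct G as [G1 [G2 _]]. unfold d_s, end_rev, Rot, Defs.c1, Defs.c2, Defs.c3; simpl.
apply is_derive_unique. auto_derive; try exact (G1 s); try exact (G2 s). all: change (fun x => g1 x) with g1; change (fun x => g2 x) with g2; ring. Qed.
Lemma ds2 th s : d_s (fun a b => Defs.c2 (end_rev g1 g2 a b)) th s = Derive g1 s * sin th.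
Proof. destruct G as [G1 [G2 _]]. unfold d_s, end_rev, Rot, Defs.c1, Defs.c2, Defs.c3; simpl.
apply is_derive_unique. auto_derive; try exact (G1 s); try exact (G2 s). all: change (fun x => g1 x) with g1; change (fun x => g2 x) with g2; ring. Qed.
Lemma ds3 th s : d_s (fun a b => Defs.c3 (end_rev g1 g2 a b)) th s = Derive g2 s.
Proof. destruct G as [G1 [G2 _]]. unfold d_s, end_rev, Rot, Defs.c1, Defs.c2, Defs.c3; simpl.
apply is_derive_unique. auto_derive; try exact (G1 s); try exact (G2 s). all: change (fun x => g1 x) with g1; change (fun x => g2 x) with g2; ring. Qed.
Lemma f3v th s : Defs.c3 (end_rev g1 g2 th s) = g2 s.
Proof. reflexivity. Qed.

Lemma gTT_v th s : 0 <= s -> gTT (end_rev g1 g2) th s = rho g1 g2 s ^ 2.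
Proof. intros Hs. destruct G as [_ [_ [Gp _]]]. destruct (Gp s Hs).
unfold gTT. rewrite dth1, dth2, dth3, f3v. unfold rho.
pose proof (sin2_cos2 th). unfold Rsqr in H1. field_simplify; try lra.
replace (g1 s ^2 * sin th ^2 + g1 s ^2 * cos th ^2) with (g1 s ^2 * (sin th * sin th + cos th * cos th)) by ring.
rewrite H1. field. lra. Qed.
Lemma gTS_v th s : gTS (end_rev g1 g2) th s = 0.
Proof. unfold gTS. rewrite dth1, dth2, dth3, ds1, ds2, ds3. ring. Qed.
Lemma gSS_v th s : 0 <= s -> gSS (end_rev g1 g2) th s = 1.
Proof. intros Hs. destruct G as [_ [_ [Gp Ga]]]. destruct (Gp s Hs).
unfold gSS. rewrite ds1, ds2, ds3, f3v. rewrite <- (Ga s Hs).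
pose proof (sin2_cos2 th). unfold Rsqr in H1. unfold Rdiv. rewrite Rmult_comm. f_equal.
replace ((Derive g1 s * cos th) ^ 2 + (Derive g1 s * sin th) ^ 2) with (Derive g1 s ^2 * (sin th * sin th + cos th * cos th)) by ring.
rewrite H1. ring. Qed.
Lemma gdet_v th s : 0 <= s -> gdet (end_rev g1 g2) th s = rho g1 g2 s ^ 2.
Proof. intros Hs. unfold gdet. rewrite gTT_v, gSS_v, gTS_v; auto. ring. Qed.
Lemma rho_pos s : 0 <= s -> 0 < rho g1 g2 s.
Proof. intros Hs. destruct G as [_ [_ [Gp _]]]. destruct (Gp s Hs). unfold rho.
apply Rdiv_lt_0_compat; auto. Qed.
Lemma sqrt_gdet th s : 0 <= s -> sqrt (gdet (end_rev g1 g2) th s) = rho g1 g2 s.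
Proof. intros Hs. rewrite gdet_v; auto. apply sqrt_pow2. left; apply rho_pos; auto. Qed.
Lemma rho_der s : 0 <= s -> ex_derive (rho g1 g2) s.
Proof. intros Hs. destruct G as [G1 [G2 [Gp _]]]. destruct (Gp s Hs). unfold rho.
auto_derive. repeat split; auto. lra. Qed.

Lemma lap_v (u : R -> R -> R) th s : C2_interior u -> 0 < s ->
  laplace_beltrami (end_rev g1 g2) u th s =
  / rho g1 g2 s * ( / rho g1 g2 s * Derive (fun t => d_th u t s) th +
     (Derive (rho g1 g2) s * d_s u th s + rho g1 g2 s * Derive (fun t => d_s u th t) s)).
Proof.
intros HC Hs. destruct (HC th s Hs) as [_ [_ [_ [_ [_ [Hss _]]]]]].
pose proof (rho_pos s ltac:(lra)) as Hr.
unfold laplace_beltrami. rewrite sqrt_gdet by lra. f_equal.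
f_equal.
- unfold d_th at 1.
  rewrite (Derive_ext _ (fun a => / rho g1 g2 s * d_th u a s)).
  + apply Derive_scal.
  + intros a. rewrite sqrt_gdet, gSS_v, gTS_v, gdet_v by lra. field. lra.
- unfold d_s at 1.
  rewrite (Derive_ext_loc _ (fun b => rho g1 g2 b * d_s u th b)).
  + apply Derive_mult. apply rho_der; lra. exact Hss.
  + assert (Hs' : 0 < s) by exact Hs.
    exists (mkposreal s Hs'). intros b Hb. simpl in Hb. unfold ball in Hb; simpl in Hb.
    unfold AbsRing_ball, abs, minus, plus, opp in Hb; simpl in Hb.
    apply Rabs_def2 in Hb.
    assert (0 < rho g1 g2 b) by (apply rho_pos; lra).
    rewrite sqrt_gdet, gTT_v, gTS_v, gdet_v by lra. field. lra.
Qed.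
End M.

Section K.
Context (g1 g2 : R -> R) (G : good g1 g2).
Let r := rho g1 g2.
Definition qf (t : R) := (1 + / (1 + Rabs t)) * / r (Rabs t).
Definition kf (t : R) := RInt qf 0 t.

Lemma r_cont t : 0 <= t -> continuous r t.
Proof. intros Ht. apply (ex_derive_continuous (V:=R_NormedModule)). apply rho_der; auto. Qed.

Lemma qf_cont t : continuous qf t.
Proof.
unfold qf.
apply (continuous_mult (K:=R_AbsRing) (fun t => 1 + / (1 + Rabs t)) (fun t => / r (Rabs t))).
- apply (continuous_plus (V:=R_NormedModule) (fun _ => 1) (fun t => / (1 + Rabs t))).
  apply continuous_const.
  apply continuous_Rinv_comp.
  apply (continuous_plus (V:=R_NormedModule) (fun _ => 1) (fun t => Rabs t)).
  apply continuous_const. apply continuous_Rabs.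
  pose proof (Rabs_pos t); lra.
- apply continuous_Rinv_comp.
  apply (continuous_comp Rabs r). apply continuous_Rabs. apply r_cont, Rabs_pos.
  pose proof (rho_pos g1 g2 G (Rabs t) (Rabs_pos t)). unfold r. lra.
Qed.

Lemma kf_der t : is_derive kf t (qf t).
Proof.
apply (is_derive_RInt qf kf 0 t).
- apply filter_forall. intros b. apply (RInt_correct (V:=R_CompleteNormedModule)). apply (ex_RInt_continuous (V:=R_CompleteNormedModule)).
  intros; apply qf_cont.
- apply qf_cont.
Qed.

Lemma kf0 : kf 0 = 0.
Proof. unfold kf. apply (RInt_point (V:=R_CompleteNormedModule)). Qed.

Lemma qf_pos t : 0 < qf t.
Proof. unfold qf. pose proof (rho_pos g1 g2 G (Rabs t) (Rabs_pos t)). pose proof (Rabs_pos t).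
apply Rmult_lt_0_compat.
assert (0 < / (1 + Rabs t)) by (apply Rinv_0_lt_compat; lra). lra.
apply Rinv_0_lt_compat; auto. Qed.

Definition qd t := (- / (1 + t)^2 * r t - (1 + / (1 + t)) * Derive r t) / (r t)^2.

Lemma qf_der t : 0 < t -> is_derive qf t (qd t).
Proof.
intros Ht. pose proof (rho_pos g1 g2 G t ltac:(lra)) as Hr. fold r in Hr.
apply (is_derive_ext_loc (fun t => (1 + / (1 + t)) * / r t)).
- exists (mkposreal t Ht). intros b Hb. unfold ball in Hb; simpl in Hb.
  unfold AbsRing_ball, abs, minus, plus, opp in Hb; simpl in Hb. apply Rabs_def2 in Hb.
  unfold qf. rewrite Rabs_pos_eq by lra. reflexivity.
- pose proof (rho_der g1 g2 G t ltac:(lra)) as Hd. fold r in Hd.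
  unfold qd. auto_derive.
  + repeat split; auto; lra.
  + change (fun x => r x) with r. field. lra.
Qed.

Lemma key_ineq t : 0 < t ->
  r t * Derive r t * qf t + (r t)^2 * qd t < 0.
Proof.
intros Ht. pose proof (rho_pos g1 g2 G t ltac:(lra)) as Hr. fold r in Hr.
unfold qf, qd. rewrite Rabs_pos_eq by lra.
replace (r t * Derive r t * ((1 + / (1 + t)) * / r t) +
   r t ^ 2 * ((- / (1 + t) ^ 2 * r t - (1 + / (1 + t)) * Derive r t) / r t ^ 2))
  with (- (r t / (1+t)^2)) by (field; lra).
assert (0 < r t / (1 + t)^2) by (apply Rdiv_lt_0_compat; [lra| apply pow_lt; lra]). lra.
Qed.
End K.

Lemma kf_div g1 g2 (G : good g1 g2) :
  (exists L : R, is_lim (centroid g1 g2) p_infty L) ->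
  forall B x0, exists S, x0 < S /\ B < kf g1 g2 S.
Proof.
intros [L HL] B x0. apply is_lim_spec in HL.
destruct (HL (mkposreal 1 Rlt_0_1)) as [M HM]. simpl in HM.
set (A := Rabs L + 1).
assert (HA : 0 < A) by (unfold A; pose proof (Rabs_pos L); lra).
set (S := Rmax (Rmax M 0) (Rmax x0 (A * B)) + 1).
assert (HS1 : M < S /\ 0 < S /\ x0 < S /\ A * B < S).
{ unfold S. repeat match goal with |- context [Rmax ?a ?b] => destruct (Rmax_Rle a b) end.
  pose proof (Rmax_l M 0). pose proof (Rmax_r M 0). pose proof (Rmax_l x0 (A*B)).
  pose proof (Rmax_r x0 (A*B)). pose proof (Rmax_l (Rmax M 0) (Rmax x0 (A*B))).
  pose proof (Rmax_r (Rmax M 0) (Rmax x0 (A*B))). lra. }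
exists S. split. lra.
set (r := rho g1 g2).
assert (Hex : ex_RInt r 0 S).
{ apply (ex_RInt_continuous (V:=R_CompleteNormedModule)). intros z Hz.
  rewrite Rmin_left in Hz by lra. apply r_cont; auto. lra. }
pose (I := (RInt r 0 S : R)).
assert (HI : I < A * S).
{ specialize (HM S ltac:(lra)). unfold centroid in HM. apply Rabs_def2 in HM.
  assert (/ S * I < A). { unfold A. pose proof (Rle_abs L). unfold I, r, rho. lra. }
  apply (Rmult_lt_compat_l S) in H; [|lra]. rewrite <- Rmult_assoc, Rinv_r, Rmult_1_l in H by lra.
  lra. }
assert (Hint : is_RInt (fun t => 2 / A - r t / A^2) 0 S (2 / A * S - I / A^2)).
{ assert (Ir : is_RInt r 0 S I) by (apply (RInt_correct (V:=R_CompleteNormedModule)); auto).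
  pose proof (is_RInt_minus _ _ _ _ _ _ (is_RInt_const 0 S (2/A)) (is_RInt_scal _ _ _ (/A^2) _ Ir)) as H.
  eapply is_RInt_ext in H.
  - replace (2 / A * S - I / A ^ 2) with (minus (scal (S - 0) (2 / A)) (scal (/ A ^ 2) I)). exact H.
    unfold minus, plus, opp, scal; simpl. unfold mult; simpl. field. lra.
  - intros x _. unfold minus, plus, opp, scal; simpl. unfold mult; simpl. field. lra. }
assert (Hle : RInt (fun t => 2 / A - r t / A^2) 0 S <= kf g1 g2 S).
{ unfold kf. apply RInt_le. lra. eexists; exact Hint.
  apply (ex_RInt_continuous (V:=R_CompleteNormedModule)). intros; apply qf_cont; auto.
  intros t Ht. unfold qf. rewrite Rabs_pos_eq by lra.
  pose proof (rho_pos g1 g2 G t ltac:(lra)) as Hr. fold r in Hr |- *.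
  assert (0 < / (1 + t)) by (apply Rinv_0_lt_compat; lra).
  assert (0 < / r t) by (apply Rinv_0_lt_compat; lra).
  assert (2 / A - r t / A ^ 2 <= / r t).
  { assert (0 <= (A - r t)^2 / (r t * A^2)).
    { apply Rdiv_le_0_compat. apply pow2_ge_0. apply Rmult_lt_0_compat; auto. apply pow_lt; auto. }
    replace ((A - r t)^2 / (r t * A^2)) with (/ r t - (2 / A - r t / A ^ 2)) in H1 by (field; lra).
    lra. }
  nra. }
rewrite (is_RInt_unique _ _ _ _ Hint) in Hle.
assert (2 / A * S - I / A ^ 2 > S / A).
{ assert (I / A^2 < S / A).
  { apply (Rmult_lt_reg_l (A^2)). apply pow_lt; auto.
    replace (A ^ 2 * (I / A ^ 2)) with I by (field; lra).
    replace (A ^ 2 * (S / A)) with (A * S) by (field; lra). auto. }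
  replace (2 / A * S) with (2 * (S / A)) by (field; lra). lra. }
assert (B < S / A).
{ apply (Rmult_lt_reg_l A); auto. replace (A * (S / A)) with S by (field; lra). lra. }
lra.
Qed.
Lemma cont_within (F : R -> R -> R) x y :
  filterlim (uncurry2 F) (within (fun p : R * R => 0 <= snd p) (locally (x,y))) (locally (F x y)) ->
  forall eps, 0 < eps -> exists del, 0 < del /\ forall x' y', 0 <= y' -> Rabs (x' - x) < del ->
    Rabs (y' - y) < del -> Rabs (F x' y' - F x y) < eps.
Proof.
intros H eps He. apply filterlim_locally with (eps := mkposreal eps He) in H.
destruct H as [d Hd]. exists d. split. apply cond_pos.
intros x' y' Hy Hx1 Hy1. specialize (Hd (x', y')). simpl in Hd.
apply Hd; auto. split; simpl; unfold ball; simpl; unfold AbsRing_ball, abs, minus, plus, opp; simpl; auto.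
Qed.

Lemma cont_1 (f : R -> R) x : continuous f x ->
  forall eps, 0 < eps -> exists del, 0 < del /\ forall x', Rabs (x' - x) < del -> Rabs (f x' - f x) < eps.
Proof.
intros H eps He. apply filterlim_locally with (eps := mkposreal eps He) in H.
destruct H as [d Hd]. exists d. split. apply cond_pos.
intros x' Hx. apply (Hd x'). unfold ball; simpl; unfold AbsRing_ball, abs, minus, plus, opp; simpl; auto.
Qed.

Lemma isd3 (f g h : R -> R) x a b c : is_derive f x a -> is_derive g x b -> is_derive h x c ->
  is_derive (fun t => f t - g t - h t) x (a - b - c).
Proof. intros. apply (is_derive_minus (fun t => f t - g t) h). apply (is_derive_minus f g); auto. auto. Qed.
Lemma isd2 (f g : R -> R) x a b : is_derive f x a -> is_derive g x b ->
  is_derive (fun t => f t - g t) x (a - b).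
Proof. intros. apply (is_derive_minus f g); auto. Qed.

Lemma compare g1 g2 (G : good g1 g2)
  (Hdiv : forall B x0, exists S, x0 < S /\ B < kf g1 g2 S) u v :
  bounded_harmonic_on_end (end_rev g1 g2) u ->
  bounded_harmonic_on_end (end_rev g1 g2) v ->
  (forall th, u th 0 = v th 0) ->
  forall th0 s0, 0 <= s0 -> u th0 s0 <= v th0 s0.
Proof.
intros [Pu [Cu [C2u [Hu [Mu HMu]]]]] [Pv [Cv [C2v [Hv [Mv HMv]]]]] Hb th0 s0 Hs0.
apply Rnot_lt_le. intro Hlt.
set (a := u th0 s0 - v th0 s0).
assert (Ha : 0 < a) by (unfold a; lra).
set (k := kf g1 g2).
set (eps := a / (2 * (Rabs (k s0) + 1))).
assert (He : 0 < eps).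
{ unfold eps. apply Rdiv_lt_0_compat; auto. pose proof (Rabs_pos (k s0)); lra. }
assert (Hek : eps * k s0 < a / 2).
{ assert (eps * Rabs (k s0) < a / 2).
  { unfold eps. pose proof (Rabs_pos (k s0)).
    apply (Rmult_lt_reg_r (2 * (Rabs (k s0) + 1))). lra.
    replace (a / (2 * (Rabs (k s0) + 1)) * Rabs (k s0) * (2 * (Rabs (k s0) + 1))) with (a * Rabs (k s0)) by (field; lra).
    nra. }
  pose proof (Rle_abs (k s0)). nra. }
destruct (Hdiv ((Mu + Mv) / eps) s0) as [S [HS1 HS2]]. fold k in HS2.
assert (HkS : Mu + Mv < eps * k S).
{ apply (Rmult_lt_compat_l eps) in HS2; auto.
  replace (eps * ((Mu + Mv) / eps)) with (Mu + Mv) in HS2 by (field; lra). auto. }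
set (W := fun x y => u x y - v x y - eps * k y).
assert (HPI := PI2_1).
destruct (evt2 W th0 (th0 + 2 * PI) 0 S) as [xs [ys [Hin Hmax]]]; try lra.
{ intros x y [Hx Hy] e He'.
  destruct (cont_within u x y (Cu x y ltac:(lra)) (e/3) ltac:(lra)) as [d1 [Hd1 P1]].
  destruct (cont_within v x y (Cv x y ltac:(lra)) (e/3) ltac:(lra)) as [d2 [Hd2 P2]].
  assert (Hkc : continuous k y).
  { apply (ex_derive_continuous (V:=R_NormedModule)). eexists; apply kf_der; auto. }
  destruct (cont_1 k y Hkc (e / 3 / eps) ltac:(apply Rdiv_lt_0_compat; lra)) as [d3 [Hd3 P3]].
  exists (Rmin d1 (Rmin d2 d3)). split.
  { repeat apply Rmin_pos; auto. }
  intros x' y' [Hx' Hy'] Hxx Hyy.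
  assert (Rmin d1 (Rmin d2 d3) <= d1) by apply Rmin_l.
  assert (Rmin d2 d3 <= d2) by apply Rmin_l.
  assert (Rmin d2 d3 <= d3) by apply Rmin_r.
  assert (Rmin d1 (Rmin d2 d3) <= Rmin d2 d3) by apply Rmin_r.
  specialize (P1 x' y' ltac:(lra) ltac:(lra) ltac:(lra)).
  specialize (P2 x' y' ltac:(lra) ltac:(lra) ltac:(lra)).
  specialize (P3 y' ltac:(lra)).
  apply Rabs_def2 in P1. apply Rabs_def2 in P2. apply Rabs_def2 in P3.
  unfold W.
  assert (eps * (k y' - k y) > - (e/3)).
  { destruct P3 as [_ P3]. apply (Rmult_lt_compat_l eps) in P3; auto.
    replace (eps * - (e / 3 / eps)) with (- (e/3)) in P3 by (field; lra). lra. }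
  lra. }
set (Ws := W xs ys).
assert (HWpos : 0 < Ws).
{ assert (W th0 s0 <= Ws) by (apply Hmax; split; lra). unfold W in H. fold a in H. lra. }
destruct Hin as [Hxs Hys].
assert (Hy0 : 0 < ys).
{ destruct (Req_dec ys 0) as [E0|]; [|lra]. exfalso. unfold Ws, W in HWpos. rewrite E0, Hb in HWpos.
  unfold k in HWpos. rewrite kf0 in HWpos. lra. }
assert (HyS : ys < S).
{ destruct (Req_dec ys S) as [E0|]; [|lra]. exfalso. unfold Ws, W in HWpos. rewrite E0 in HWpos.
  pose proof (HMu xs S ltac:(lra)). pose proof (HMv xs S ltac:(lra)).
  apply Rabs_le_between in H. apply Rabs_le_between in H0. lra. }
assert (HWp : forall x y, W (x + 2 * PI) y = W x y).
{ intros x y. unfold W. rewrite Pu, Pv. auto. }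
assert (Tth : forall x, Rabs (x - xs) < 1 -> W x ys <= W xs ys).
{ intros x Hx. apply Rabs_def2 in Hx.
  destruct (Rlt_or_le x th0) as [Hl|Hl].
  - rewrite <- HWp. apply Hmax. split; lra.
  - destruct (Rle_or_lt x (th0 + 2 * PI)) as [Hl2|Hl2].
    + apply Hmax. split; lra.
    + replace x with ((x - 2 * PI) + 2 * PI) by ring. rewrite HWp. apply Hmax. split; lra. }
destruct (C2u xs ys Hy0) as [U1 [U2 [U3 [U4 [U5 [U6 _]]]]]].
destruct (C2v xs ys Hy0) as [V1 [V2 [V3 [V4 [V5 [V6 _]]]]]].
assert (T1 : forall y, Rabs (y - xs) < 1 -> is_derive (fun x => W x ys) y (d_th u y ys - d_th v y ys)).
{ intros y _. unfold W.
  destruct (C2u y ys Hy0) as [W1 _]. destruct (C2v y ys Hy0) as [X1 _].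
  replace (d_th u y ys - d_th v y ys) with (d_th u y ys - d_th v y ys - 0) by ring.
  apply isd3. apply (Derive_correct _ _ W1). apply (Derive_correct _ _ X1).
  apply (is_derive_const (K:=R_AbsRing) (V:=R_NormedModule)). }
assert (T2 : is_derive (fun t => d_th u t ys - d_th v t ys) xs
   (Derive (fun t => d_th u t ys) xs - Derive (fun t => d_th v t ys) xs)).
{ apply isd2. apply (Derive_correct _ _ U3). apply (Derive_correct _ _ V3). }
destruct (max_test _ _ _ _ 1 Rlt_0_1 T1 T2 Tth) as [_ Dth].
set (r2 := Rmin ys (S - ys)).
assert (Hr2 : 0 < r2) by (unfold r2; apply Rmin_pos; lra).
assert (Hr2a : r2 <= ys) by apply Rmin_l.
assert (Hr2b : r2 <= S - ys) by apply Rmin_r.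
assert (S1 : forall y, Rabs (y - ys) < r2 -> is_derive (fun t => W xs t) y
    (d_s u xs y - d_s v xs y - eps * qf g1 g2 y)).
{ intros y Hy. apply Rabs_def2 in Hy. unfold W.
  destruct (C2u xs y ltac:(lra)) as [_ [W2 _]]. destruct (C2v xs y ltac:(lra)) as [_ [X2 _]].
  apply isd3. apply (Derive_correct _ _ W2). apply (Derive_correct _ _ X2).
  apply (is_derive_scal (fun t => k t) y eps (qf g1 g2 y)). apply kf_der; auto. }
assert (S2 : is_derive (fun t => d_s u xs t - d_s v xs t - eps * qf g1 g2 t) ys
   (Derive (fun t => d_s u xs t) ys - Derive (fun t => d_s v xs t) ys - eps * qd g1 g2 ys)).
{ apply isd3. apply (Derive_correct _ _ U6). apply (Derive_correct _ _ V6).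
  apply (is_derive_scal (fun t => qf g1 g2 t) ys eps (qd g1 g2 ys)). apply qf_der; auto. }
assert (S3 : forall y, Rabs (y - ys) < r2 -> W xs y <= W xs ys).
{ intros y Hy. apply Rabs_def2 in Hy. apply Hmax. split; lra. }
destruct (max_test _ _ _ _ r2 Hr2 S1 S2 S3) as [Ds0 Dss].
pose proof (Hu xs ys Hy0) as Lu. rewrite (lap_v g1 g2 G u xs ys C2u Hy0) in Lu.
pose proof (Hv xs ys Hy0) as Lv. rewrite (lap_v g1 g2 G v xs ys C2v Hy0) in Lv.
pose proof (key_ineq g1 g2 G ys Hy0) as Kq.
pose proof (rho_pos g1 g2 G ys ltac:(lra)) as Rp.
set (p := rho g1 g2 ys) in *. set (p' := Derive (rho g1 g2) ys) in *.
set (A1 := Derive (fun t => d_th u t ys) xs) in *.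
set (A2 := Derive (fun t => d_th v t ys) xs) in *.
set (B1 := d_s u xs ys) in *. set (B2 := d_s v xs ys) in *.
set (C1 := Derive (fun t => d_s u xs t) ys) in *.
set (C2 := Derive (fun t => d_s v xs t) ys) in *.
set (q0 := qf g1 g2 ys) in *. set (q1 := qd g1 g2 ys) in *.
assert (Eu : A1 + p * p' * B1 + p^2 * C1 = 0).
{ replace (A1 + p * p' * B1 + p^2 * C1) with (p^2 * (/ p * (/ p * A1 + (p' * B1 + p * C1)))) by (field; lra).
  rewrite Lu. ring. }
assert (Ev : A2 + p * p' * B2 + p^2 * C2 = 0).
{ replace (A2 + p * p' * B2 + p^2 * C2) with (p^2 * (/ p * (/ p * A2 + (p' * B2 + p * C2)))) by (field; lra).
  rewrite Lv. ring. }
assert (Hp2 : 0 < p^2) by (apply pow_lt; lra).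
assert (p^2 * (C1 - C2) <= p^2 * (eps * q1)) by (apply Rmult_le_compat_l; lra).
assert (HB12 : B1 - B2 = eps * q0) by lra.
assert (0 <= eps * (p * p' * q0 + p^2 * q1)).
{ replace (eps * (p * p' * q0 + p^2 * q1)) with (p * p' * (B1 - B2) + p^2 * (eps * q1)) by (rewrite HB12; ring).
  assert (p * p' * (B1 - B2) + p^2 * (C1 - C2) = - (A1 - A2)) by lra. lra. }
assert (eps * (p * p' * q0 + p^2 * q1) < 0).
{ replace 0 with (eps * 0) by ring. apply Rmult_lt_compat_l; auto. }
lra.
Qed.

Theorem theorem8p3 (g1 g2 : R -> R) :
  smooth g1 -> smooth g2 ->
  (forall s, 0 <= s -> 0 < g1 s /\ 0 < g2 s) ->
  (* regular *)
  (forall s, 0 <= s -> (Derive g1 s, Derive g2 s) <> (0, 0)) ->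
  (* parametrized by hyperbolic arc length *)
  (forall s, 0 <= s -> ((Derive g1 s)^2 + (Derive g2 s)^2) / (g2 s)^2 = 1) ->
  (* confined centroid *)
  (exists L : R, is_lim (centroid g1 g2) p_infty L) ->
  parabolic_end (end_rev g1 g2).
Proof.
intros S1 S2 Hp _ Ha Hc.
assert (G : good g1 g2).
{ split; [intros s; exact (S1 1%nat s)|]. split; [intros s; exact (S2 1%nat s)|]. split; auto. }
pose proof (kf_div g1 g2 G Hc) as Hdiv.
intros u v Hu Hv Hb th s Hs. apply Rle_antisym.
- apply (compare g1 g2 G Hdiv u v Hu Hv Hb th s Hs).
- apply (compare g1 g2 G Hdiv v u Hv Hu (fun th => eq_sym (Hb th)) th s Hs).
Qed.
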